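(* Let $T>0$ and let $\Sigma=(\mathcal X,\mathcal Y,M_U,M_D,\phi,\pi,H)$ be a $T$-periodic control system with outputs. If $\Sigma$ satisfies the WIOS property from the input $u\in M_U$, then $\Sigma$ satisfies the UWIOS property from the input $u\in M_U$.
   Context: Notation: $\mathbb R^+=[0,\infty)$. $K^+$: positive continuous functions on $\mathbb R^+$. $\mathcal N$: continuous non-decreasing $\rho:\mathbb R^+\to\mathbb R^+$ with $\rho(0)=0$. $K$: positive definite, increasing, continuous functions $\mathbb R^+\to\mathbb R^+$. $KL$: continuous $\sigma:\mathbb R^+\times\mathbb R^+\to\mathbb R^+$ with $\sigma(\cdot,t)\in K$ for each $t$ and $\sigma(s,\cdot)$ non-increasing tending to $0$. For a subset $U$ of a normed linear space $\mathcal U$ with $0\in U$, $\mathcal M(U)$ is the set of locally bounded $u:\mathbb R^+\to U$, $u_0$ the zero input, $B_U[0,r]=\{v\in U:\|v\|_{\mathcal U}\le r\}$. Control system with outputs $\Sigma=(\mathcal X,\mathcal Y,M_U,M_D,\phi,\pi,H)$: a set $U\subseteq\mathcal U$ ($0\in U$) and $M_U\subseteq\mathcal M(U)$ containing $u_0$; a set $D$ and $M_D\subseteq\mathcal M(D)$; normed linear spaces $\mathcal X,\mathcal Y$; a continuous $H:\mathbb R^+\times\mathcal X\times U\to\mathcal Y$ mapping bounded sets into bounded sets; a set-valued map $(t_0,x_0,u,d)\mapsto\pi(t_0,x_0,u,d)\subseteq[t_0,\infty)$ with $t_0\in\pi(t_0,x_0,u,d)$; a map $\phi:A_\phi\to\mathcal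 X$, $A_\phi\subseteq\mathbb R^+\times\mathbb R^+\times\mathcal X\times M_U\times M_D$, with: (1) for each $(t_0,x_0,u,d)$ some $t>t_0$ has $[t_0,t]\times\{(t_0,x_0,u,d)\}\subseteq A_\phi$; (2) $\phi(t_0,t_0,x_0,u,d)=x_0$; (3) causality: if $(t,t_0,x_0,u,d)\in A_\phi$, $t>t_0$, and $(\tilde u,\tilde d)$ agrees with $(u,d)$ on $[t_0,t]$, then $(t,t_0,x_0,\tilde u,\tilde d)\in A_\phi$ with the same value of $\phi$; (4) weak semigroup property: there is $r>0$ such that for each $t\ge t_0$ with $(t,t_0,x_0,u,d)\in A_\phi$: (a) $(\tau,t_0,x_0,u,d)\in A_\phi$ for $\tau\in[t_0,t]$; (b) $\phi(t,\tau,\phi(\tau,t_0,x_0,u,d),u,d)=\phi(t,t_0,x_0,u,d)$ for $\tau\in[t_0,t]\cap\pi(t_0,x_0,u,d)$; (c) if $(t+r,t_0,x_0,u,d)\in A_\phi$ then $\pi(t_0,x_0,u,d)\cap[t,t+r]\ne\emptyset$; (d) for $\tau\in\pi(t_0,x_0,u,d)$ with $(\tau,t_0,x_0,u,d)\in A_\phi$, $\pi(\tau,\phi(\tau,t_0,x_0,u,d),u,d)=\pi(t_0,x_0,u,d)\cap[\tau,\infty)$. $T$-periodic: (a) $H(t+T,x,u)=H(t,x,u)$ for all $(t,x,u)$; (b) for every $(u,d)\in M_U\times M_D$ and integer $k$ there are $P_{kT}u\in M_U$, $P_{kT}d\in M_D$ with $(P_{kT}u)(t)=u(t+kT)$, $(P_{kT}d)(t)=d(t+kT)$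 for all $t+kT\ge0$; (c) for each $(t,t_0,x_0,u,d)\in A_\phi$ with $t\ge t_0$ and each integer $k$ with $t_0-kT\ge0$: $(t-kT,t_0-kT,x_0,P_{kT}u,P_{kT}d)\in A_\phi$, $\pi(t_0-kT,x_0,P_{kT}u,P_{kT}d)=\{\tau-kT:\tau\in\pi(t_0,x_0,u,d)\}$ and $\phi(t,t_0,x_0,u,d)=\phi(t-kT,t_0-kT,x_0,P_{kT}u,P_{kT}d)$. BIC property: for each $(t_0,x_0,u,d)$ there is $t_{\max}\in(t_0,+\infty]$ with $A_\phi=\bigcup[t_0,t_{\max})\times\{(t_0,x_0,u,d)\}$, and if $t_{\max}<\infty$ then $\phi(\cdot,t_0,x_0,u,d)$ is unbounded on $[t_0,t_{\max})$. RFC from the input $u$: BIC and for all $r,T'\ge0$, $\sup\{\|\phi(t_0+s,t_0,x_0,u,d)\|_{\mathcal X}: u\in\mathcal M(B_U[0,r])\cap M_U, s\in[0,T'],\|x_0\|_{\mathcal X}\le r,t_0\in[0,T'],d\in M_D\}<\infty$. Robust equilibrium point from the input $u$: $H(t,0,0)=0$; $\phi(t,t_0,0,u_0,d)=0$ for all $t\ge t_0$, $d$; and for all $\varepsilon>0$, $T',h\ge0$ there is $\eta>0$ such that $\|x\|+\sup_t\|u(t)\|<\eta$, $t_0\in[0,T']$, $\tau\in[t_0,t_0+h]$, $d\in M_D$ imply $(\tau,t_0,x,u,d)\in A_\phi$ and $\|\phi(\tau,t_0,x,u,d)\|<\varepsilon$. WIOS from the input $u\in M_U$: $\Sigma$ has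 BIC, is RFC from $u$, $0$ is a robust equilibrium point from $u$, and there exist $\sigma\in KL$, $\beta,\delta\in K^+$, $\gamma\in\mathcal N$ with $\|H(t,\phi(t,t_0,x_0,u,d),u(t))\|_{\mathcal Y}\le\sigma(\beta(t_0)\|x_0\|_{\mathcal X},t-t_0)+\sup_{t_0\le\tau\le t}\gamma(\delta(\tau)\|u(\tau)\|_{\mathcal U})$ for all $u\in M_U$, $(t_0,x_0,d)$, $t\ge t_0$. UWIOS: the same with $\beta\equiv1$. *)

(* Defs.v *)
From HB Require Import structures.
From mathcomp Require Import all_boot all_order all_algebra.
From mathcomp Require Import all_classical all_reals all_analysis.
Set Implicit Arguments. Unset Strict Implicit. Unset Printing Implicit Defensive.
Import Order.TTheory GRing.Theory Num.Theory.
Import numFieldNormedType.Exports.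
Local Open Scope classical_set_scope.
Local Open Scope ring_scope.

Section Classes.
Variable R : realType.

Definition nonneg : set R := [set t | 0 <= t].

Definition classKplus (f : R -> R) : Prop :=
  (forall t, 0 <= t -> 0 < f t) /\ {within nonneg, continuous f}.

Definition classN (rho : R -> R) : Prop :=
  {within nonneg, continuous rho} /\
  (forall s, 0 <= s -> 0 <= rho s) /\
  (forall s t, 0 <= s -> s <= t -> rho s <= rho t) /\
  rho 0 = 0.

Definition classK (a : R -> R) : Prop :=
  {within nonneg, continuous a} /\
  a 0 = 0 /\ (forall s, 0 < s -> 0 < a s) /\
  (forall s t, 0 <= s -> s < t -> a s < a t).

Definition classKL (sigma : R -> R -> R) : Prop :=
  {within [set p : R * R | 0 <= p.1 /\ 0 <= p.2],
     continuous (fun p : R * R => sigma p.1 p.2)} /\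
  (forall t, 0 <= t -> classK (fun s => sigma s t)) /\
  (forall s, 0 <= s ->
     (forall t1 t2, 0 <= t1 -> t1 <= t2 -> sigma s t2 <= sigma s t1) /\
     (sigma s t @[t --> +oo] --> 0)).
End Classes.

(* The data of a control system with outputs
   Sigma = (X, Y, M_U, M_D, phi, pi, H).
   Time functions are represented as maps R -> _ whose values on [0,+oo)
   are the relevant ones. *)
Record ctrl_sys (R : realType) (X Y UU : normedModType R) (D : Type) := CtrlSys {
  cs_U : set UU;
  cs_MU : set (R -> UU);
  cs_MD : set (R -> D);
  cs_Aphi : R -> R -> X -> (R -> UU) -> (R -> D) -> Prop;
  cs_phi : R -> R -> X -> (R -> UU) -> (R -> D) -> X;      (* phi (meaningful on A_phi) *)
  cs_pi : R -> X -> (R -> UU) -> (R -> D) -> set R;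
  cs_H : R -> X -> UU -> Y
}.

Section Props.
Variables (R : realType) (X Y UU : normedModType R) (D : Type).
Variable S : ctrl_sys X Y UU D.

Local Notation U := (cs_U S).
Local Notation MU := (cs_MU S).
Local Notation MD := (cs_MD S).
Local Notation Aphi := (cs_Aphi S).
Local Notation phi := (cs_phi S).
Local Notation pi := (cs_pi S).
Local Notation H := (cs_H S).

Definition zero_input : R -> UU := fun _ => 0.

Definition locally_bounded_in (u : R -> UU) : Prop :=
  (forall t, 0 <= t -> U (u t)) /\
  (forall T', exists M : R, forall t, 0 <= t -> t <= T' -> `|u t| <= M).

Definition is_control_system : Prop :=
  U 0 /\
  (forall u, MU u -> locally_bounded_in u) /\
  MU zero_input /\
  {within [set p : R * (X * UU) | 0 <= p.1 /\ U p.2.2],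
     continuous (fun p : R * (X * UU) => H p.1 p.2.1 p.2.2)} /\
  (forall r : R, exists M : R, forall t x v,
      0 <= t -> t <= r -> `|x| <= r -> U v -> `|v| <= r -> `|H t x v| <= M) /\
  (forall t t0 x0 u d, Aphi t t0 x0 u d -> [/\ 0 <= t, 0 <= t0, MU u & MD d]) /\
  (forall t0 x0 u d, 0 <= t0 -> MU u -> MD d ->
      pi t0 x0 u d `<=` [set t | t0 <= t] /\ pi t0 x0 u d t0) /\
  (forall t0 x0 u d, 0 <= t0 -> MU u -> MD d ->
      exists t, t0 < t /\ forall s, t0 <= s -> s <= t -> Aphi s t0 x0 u d) /\
  (forall t0 x0 u d, 0 <= t0 -> MU u -> MD d -> phi t0 t0 x0 u d = x0) /\
  (forall t t0 x0 u d u' d', Aphi t t0 x0 u d -> t0 < t -> MU u' -> MD d' ->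
      (forall s, t0 <= s -> s <= t -> u' s = u s /\ d' s = d s) ->
      Aphi t t0 x0 u' d' /\ phi t t0 x0 u' d' = phi t t0 x0 u d) /\
  (exists r : R, 0 < r /\
    forall t t0 x0 u d, t0 <= t -> Aphi t t0 x0 u d ->
      (forall tau, t0 <= tau -> tau <= t -> Aphi tau t0 x0 u d) /\
      (forall tau, t0 <= tau -> tau <= t -> pi t0 x0 u d tau ->
         Aphi t tau (phi tau t0 x0 u d) u d /\
         phi t tau (phi tau t0 x0 u d) u d = phi t t0 x0 u d) /\
      (Aphi (t + r) t0 x0 u d ->
         exists tau, pi t0 x0 u d tau /\ t <= tau /\ tau <= t + r) /\
      (forall tau, pi t0 x0 u d tau -> Aphi tau t0 x0 u d ->
         pi tau (phi tau t0 x0 u d) u d = pi t0 x0 u d `&` [set s | tau <= s])).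

Definition T_periodic (T : R) : Prop :=
  (forall t x v, 0 <= t -> U v -> H (t + T) x v = H t x v) /\
  exists (PU : int -> (R -> UU) -> (R -> UU)) (PD : int -> (R -> D) -> (R -> D)),
    (forall u d (k : int), MU u -> MD d ->
       MU (PU k u) /\ MD (PD k d) /\
       forall t, 0 <= t -> 0 <= t + k%:~R * T ->
         PU k u t = u (t + k%:~R * T) /\ PD k d t = d (t + k%:~R * T)) /\
    (forall t t0 x0 u d (k : int), Aphi t t0 x0 u d -> t0 <= t ->
       0 <= t0 - k%:~R * T ->
       Aphi (t - k%:~R * T) (t0 - k%:~R * T) x0 (PU k u) (PD k d) /\
       pi (t0 - k%:~R * T) x0 (PU k u) (PD k d)
         = [set tau - k%:~R * T | tau in pi t0 x0 u d] /\
       phi t t0 x0 u d = phi (t - k%:~R * T) (t0 - k%:~R * T) x0 (PU k u) (PD k d)).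

Definition BIC : Prop :=
  forall t0 x0 u d, 0 <= t0 -> MU u -> MD d ->
    exists tmax : \bar R, (t0%:E < tmax)%E /\
      (forall t, Aphi t t0 x0 u d <-> (t0 <= t /\ (t%:E < tmax)%E)) /\
      ((tmax < +oo)%E ->
         ~ (exists M : R, forall t, t0 <= t -> (t%:E < tmax)%E ->
              `|phi t t0 x0 u d| <= M)).

Definition RFC : Prop :=
  BIC /\
  forall r T' : R, 0 <= r -> 0 <= T' ->
    exists M : R, forall u s x0 t0 d,
      MU u -> (forall t, 0 <= t -> `|u t| <= r) ->
      0 <= s -> s <= T' -> `|x0| <= r -> 0 <= t0 -> t0 <= T' -> MD d ->
      Aphi (t0 + s) t0 x0 u d -> `|phi (t0 + s) t0 x0 u d| <= M.

Definition robust_equilibrium : Prop :=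
  (forall t, 0 <= t -> H t 0 0 = 0) /\
  (forall t t0 d, 0 <= t0 -> t0 <= t -> MD d ->
      Aphi t t0 0 zero_input d /\ phi t t0 0 zero_input d = 0) /\
  (forall eps T' h : R, 0 < eps -> 0 <= T' -> 0 <= h ->
     exists eta : R, 0 < eta /\
       forall x u t0 tau d,
         MU u ->
         (* ||x|| + sup_{t>=0} ||u(t)|| < eta *)
         (exists Mu : R, (forall t, 0 <= t -> `|u t| <= Mu) /\ `|x| + Mu < eta) ->
         0 <= t0 -> t0 <= T' -> t0 <= tau -> tau <= t0 + h -> MD d ->
         Aphi tau t0 x u d /\ `|phi tau t0 x u d| < eps).

Definition wios_estimate (sigma : R -> R -> R) (beta delta gamma : R -> R) : Prop :=
  forall u t0 x0 d t, MU u -> 0 <= t0 -> MD d -> t0 <= t -> Aphi t t0 x0 u d ->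
    ((`|H t (phi t t0 x0 u d) (u t)|)%:E <=
      (sigma (beta t0 * `|x0|) (t - t0))%:E +
      ereal_sup [set (gamma (delta tau * `|u tau|))%:E | tau in [set tau : R | (t0 <= tau <= t)%R]])%E.

Definition WIOS : Prop :=
  BIC /\ RFC /\ robust_equilibrium /\
  exists sigma beta delta gamma,
    classKL sigma /\ classKplus beta /\ classKplus delta /\ classN gamma /\
    wios_estimate sigma beta delta gamma.

Definition UWIOS : Prop :=
  BIC /\ RFC /\ robust_equilibrium /\
  exists sigma delta gamma,
    classKL sigma /\ classKplus delta /\ classN gamma /\
    wios_estimate sigma (fun _ => 1) delta gamma.

End Props.

(* Main.v *)
Require Import Defs.
From mathcomp Require Import all_boot all_order all_algebra.
From mathcomp Require Import all_classical all_reals all_analysis.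
From mathcomp Require Import ring lra.
Import Order.TTheory GRing.Theory Num.Theory.
Import numFieldNormedType.Exports.
Local Open Scope classical_set_scope.
Local Open Scope ring_scope.
Set Implicit Arguments. Unset Strict Implicit.

Lemma within_epsP (R: realType) (A : set R) (f : R -> R) :
  {within A, continuous f} <-> forall x, A x -> forall e, 0 < e ->
   exists2 d, 0 < d & forall y, A y -> `|x - y| < d -> `|f x - f y| < e.
Proof.
rewrite (@subspace_continuousP _ A _ f).
split.
- move=> cf x Ax e e0.
  have := cf x Ax. move/cvgrPdist_lt => /(_ e e0).
  rewrite /= /within /prop_near1 /= => /nbhs_ballP [d d0 H].
  exists d => // y Ay xy. apply: (H y) => //.
- move=> H x Ax; apply/cvgrPdist_lt => e e0; have [d d0 Hd] := H x Ax e e0.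
  rewrite /= /within /prop_near1 /=; apply/nbhs_ballP; exists d => // y /= xy Ay.
  exact: Hd.
Qed.

Definition rmax (R : realType) (d : R -> R) (t : R) : R :=
  sup [set d r | r in [set r | 0 <= r <= t]].
Arguments rmax {R}.

Lemma bounded_on (R : realType) (d : R -> R) (t : R) :
  {within nonneg (R:=R), continuous d} -> 0 <= t ->
  exists M, forall r, 0 <= r <= t -> d r <= M.
Proof.
move=> cd t0.
have cd' : {within `[0, t], continuous d}.
  apply: continuous_subspaceW cd => r /=; rewrite in_itv /= => /andP[] //.
have [c _ Hc] := EVT_max t0 cd'.
by exists (d c) => r Hr; apply: Hc; rewrite in_itv /=.
Qed.

Lemma rmax_ge (R : realType) (d : R -> R) (t r : R) :
  {within nonneg (R:=R), continuous d} -> 0 <= r <= t -> d r <= rmax d t.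
Proof.
move=> cd Hr.
have t0 : 0 <= t by case/andP: Hr => ? ?; apply: le_trans; eauto.
have [M HM] := bounded_on cd t0.
apply: ub_le_sup; last by exists r.
by exists M => _ [y Hy <-]; apply: HM.
Qed.

Lemma rmax_le (R : realType) (d : R -> R) (t c : R) :
  0 <= t -> (forall r, 0 <= r <= t -> d r <= c) -> rmax d t <= c.
Proof.
move=> t0 H; apply: ge_sup.
  by exists (d 0), 0 => //=; rewrite lexx t0.
by move=> _ [y Hy <-]; apply: H.
Qed.

Lemma rmax_cont (R : realType) (d : R -> R) :
  {within nonneg (R:=R), continuous d} -> {within nonneg (R:=R), continuous (rmax d)}.
Proof.
move=> cd; have cdE := cd; move/within_epsP: cdE => cdE.
apply/within_epsP => x0 x00 e e0.
have e30 : 0 < e / 3 by rewrite divr_gt0.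
have [eta eta0 Heta] := cdE x0 x00 (e / 3) e30.
have claim : forall a b, 0 <= a -> a <= b -> `|x0 - a| < eta -> `|x0 - b| < eta ->
   rmax d a <= rmax d b <= rmax d a + 2 * (e / 3).
  move=> a b a0 ab ha hb; apply/andP; split.
    apply: rmax_le => // r /andP[r0 ra]; apply: rmax_ge => //.
    by rewrite r0 /=; apply: le_trans ab.
  apply: rmax_le; first by apply: le_trans ab.
  move=> r /andP[r0 rb]; case: (leP r a) => ra.
    have := rmax_ge cd (t:=a) (r:=r); rewrite r0 ra => /(_ isT) => h.
    have : 0 < e / 3 by []. lra.
  have hr : `|x0 - r| < eta.
    move: ha hb; rewrite !ltr_norml => /andP[h1 h2] /andP[h3 h4].
    apply/andP; split; lra.
  have h1 := Heta r r0 hr.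
  have h2 := Heta a a0 ha.
  have h3 := rmax_ge cd (t:=a) (r:=a); rewrite a0 lexx in h3.
  have h3' := h3 isT.
  move: h1 h2; rewrite !ltr_norml => /andP[h1 h1'] /andP[h2 h2'].
  lra.
exists eta => // y y0 hy.
have hx0 : `|x0 - x0| < eta by rewrite subrr normr0.
case: (leP x0 y) => xy.
  have /andP[c1 c2] := claim x0 y x00 xy hx0 hy.
  rewrite ltr_norml; apply/andP; split; lra.
have /andP[c1 c2] := claim y x0 y0 (ltW xy) hy hx0.
rewrite ltr_norml; apply/andP; split; lra.
Qed.
Lemma within_comp_within {T U V : topologicalType} (A : set T) (B : set U)
  (f : T -> U) (g : U -> V) :
  (forall a, A a -> B (f a)) -> {within A, continuous f} ->
  {within B, continuous g} -> {within A, continuous (g \o f)}.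
Proof.
move=> AB /subspace_continuousP cf /subspace_continuousP cg.
apply/subspace_continuousP => x Ax.
have cf' : f @ within A (nbhs x) --> within B (nbhs (f x)).
  move=> P BP.
  have := cf x Ax (fun z => B z -> P z) BP.
  rewrite /within /= !nbhs_simpl /=.
  by apply: filterS => y H Ay; exact: H Ay (AB _ Ay).
exact: cvg_comp cf' (cg _ (AB _ Ax)).
Qed.

Lemma cont_scale1 (R : realType) (b : R) :
  continuous (fun p : R * R => (b * p.1, p.2)).
Proof.
move=> p. apply: (@cvg_pair _ _ _ _ (nbhs (b * p.1)) (nbhs p.2) _ _ _ (fun q : R * R => b * q.1) snd) => /=.
  apply: cvgMr. exact: cvg_fst.
exact: cvg_snd.
Qed.
Lemma test (R : realType) (b : R) : {within [set p : R * R | 0 <= p.1 /\ 0 <= p.2], continuous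
  (fun p : R * R => (b * p.1, p.2))}.
Proof.
apply: continuous_subspaceT.
exact: cont_scale1.
Qed.
Lemma test2 (R : realType) (b : R) : {within nonneg (R:=R), continuous (fun s : R => b * s)}.
apply: continuous_subspaceT.
move=> s; apply: cvgMr; exact: cvg_id.
Qed.
Lemma classK_le (R : realType) (a : R -> R) x y :
  classK a -> 0 <= x -> x <= y -> a x <= a y.
Proof.
move=> [_ [_ [_ inc]]] x0; rewrite le_eqVlt => /orP[/eqP -> //|xy].
exact/ltW/inc.
Qed.

Lemma classN_le (R : realType) (a : R -> R) x y :
  classN a -> 0 <= x -> x <= y -> a x <= a y.
Proof. by move=> [_ [_ [inc _]]]; apply: inc. Qed.

Unset Implicit Arguments.

Theorem lemma2p18 (R : realType) (X Y UU : normedModType R) (D : Type)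
  (S : ctrl_sys X Y UU D) (T : R) :
  0 < T -> is_control_system S -> T_periodic S T -> WIOS S -> UWIOS S.
Proof.
move=> T0 [U0 [MUlb [MU0 [Hcont [Hbd [Adom [piax [ax1 [ax2 [ax3 ax4]]]]]]]]]].
move=> [Hper [PU [PD [Pb Pc]]]].
move=> [bic [rfc [req [sigma [beta [delta [gamma [sKL [bK [dK [gN est]]]]]]]]]]].
split => //; split => //; split => //.
have cb : {within `[0, T], continuous beta}.
  apply: continuous_subspaceW (proj2 bK) => r /=; rewrite in_itv /= => /andP[] //.
have [c c0T Hc] := EVT_max (ltW T0) cb.
set b := beta c.
have b0 : 0 < b by apply: (proj1 bK); move: c0T; rewrite in_itv /= => /andP[].
have Hper' : forall n : nat, forall t x v, 0 <= t -> cs_U S v ->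
    cs_H S (t + n%:R * T) x v = cs_H S t x v.
  elim=> [|n IH] t x v t0 Uv; first by rewrite mul0r addr0.
  rewrite mulrSr mulrDl mul1r addrA Hper ?IH //.
  by apply: addr_ge0 => //; apply: mulr_ge0 => //; exact: ltW.
exists (fun s t => sigma (b * s) t), (rmax delta), gamma.
case: sKL => [sc [sK sdec]].
split; [|split; [|split]].
- split; [|split].
  + have := within_comp_within (A := [set p : R * R | 0 <= p.1 /\ 0 <= p.2])
      (B := [set p : R * R | 0 <= p.1 /\ 0 <= p.2]) (f := fun p : R * R => (b * p.1, p.2))
      (g := fun p : R * R => sigma p.1 p.2).
    apply.
    * move=> p /= [h1 h2]; split => //; apply: mulr_ge0 => //; exact: ltW.
    * exact: test.
    * exact: sc.
  + move=> t t0; have [c1 [c2 [c3 c4]]] := sK t t0; split; [|split; [|split]].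
    * have := within_comp_within (A := nonneg (R:=R)) (B := nonneg (R:=R))
        (f := fun s : R => b * s) (g := fun s => sigma s t).
      apply => //.
        by move=> s; rewrite /nonneg /= => s0; apply: mulr_ge0 => //; exact: ltW.
      exact: test2.
    * by rewrite /= mulr0.
    * by move=> s s0 /=; apply: c3; apply: mulr_gt0.
    * move=> s s' s0 ss' /=; apply: c4.
        by apply: mulr_ge0 => //; exact: ltW.
      by rewrite ltr_pM2l.
  + move=> s s0; apply: sdec; apply: mulr_ge0 => //; exact: ltW.
- split.
  + move=> t t0; apply: lt_le_trans (proj1 dK t t0) _.
    by apply: rmax_ge (proj2 dK) _; rewrite t0 lexx.
  + exact: rmax_cont (proj2 dK).
- exact: gN.
move=> u t0 x0 d t MUu t00 MDd t0t A.
have t0' : 0 <= t0 / T by apply: divr_ge0 => //; exact: ltW.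
have /andP[k1 k2] := truncn_itv t0'.
set n := Num.truncn (t0 / T) in k1 k2.
have kT1 : n%:R * T <= t0 by rewrite -ler_pdivlMr.
have kT2 : t0 < n%:R * T + T.
  by rewrite -[X in _ + X]mul1r -mulrDl -ltr_pdivrMr // -mulrSr.
have nT0 : 0 <= n%:R * T by apply: mulr_ge0 => //; exact: ltW.
have Ekz : (n%:Z)%:~R = n%:R :> R by rewrite -pmulrn.
have s0 : 0 <= t0 - (n%:Z)%:~R * T by rewrite Ekz subr_ge0.
have [A' [_ phiE]] := Pc t t0 x0 u d n%:Z A t0t s0.
have [MU' [MD' shift]] := Pb u d n%:Z MUu MDd.
have t00' : t0 - (n%:Z)%:~R * T <= t - (n%:Z)%:~R * T by rewrite lerD2r.
have E := est (PU n%:Z u) (t0 - (n%:Z)%:~R * T) x0 (PD n%:Z d) (t - (n%:Z)%:~R * T)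
  MU' s0 MD' t00' A'.
rewrite -phiE in E.
have tt : 0 <= t by apply: le_trans t0t.
have ts : 0 <= t - (n%:Z)%:~R * T by apply: le_trans t00'.
move: E.
have [-> _] := shift (t - (n%:Z)%:~R * T) ts (ltac:(by rewrite subrK)).
rewrite subrK.
have Uut : cs_U S (u t) by apply: (proj1 (MUlb u MUu)).
have := Hper' n (t - n%:R * T) (cs_phi S t t0 x0 u d) (u t) _ Uut.
rewrite subrK Ekz; rewrite Ekz in ts; move=> /(_ ts) <-.
rewrite (_ : t - n%:R * T - (t0 - n%:R * T) = t - t0); last by ring.
move=> E; apply: le_trans E _.
apply: leeD.
  rewrite lee_fin; apply: (classK_le (sK _ _)).
  + by rewrite subr_ge0.
  + by apply: mulr_ge0 => //; apply: ltW; apply: (proj1 bK); rewrite -Ekz.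
  + rewrite mul1r; apply: ler_wpM2r => //; apply: Hc; rewrite in_itv /=; apply/andP; split.
      by rewrite -Ekz.
    lra.
apply: ge_ereal_sup => _ [tau /andP[h1 h2] <-].
apply: le_ereal_sup_tmp.
have tau0 : 0 <= tau by apply: le_trans h1.
have taun : 0 <= tau + (n%:Z)%:~R * T by rewrite Ekz addr_ge0.
exists (gamma (rmax delta (tau + n%:R * T) * `|u (tau + n%:R * T)|))%:E.
  exists (tau + n%:R * T) => //; apply/andP; split.
    by rewrite -lerBlDr -Ekz.
  by rewrite -lerBrDr -Ekz.
have [-> _] := shift tau tau0 taun.
rewrite Ekz lee_fin; apply: (classN_le gN).
  by apply: mulr_ge0 => //; apply: ltW; apply: (proj1 dK).
apply: ler_wpM2r => //; apply: rmax_ge (proj2 dK) _.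
by rewrite tau0 lerDl.
Qed.
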